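(* Let $k$ be algebraically closed of characteristic $p$, $C\subset\mathbb P^2$ the Fermat curve $X_1^{p+1}+X_2^{p+1}+X_3^{p+1}=0$, and $t=(t_1,t_2,t_3)^T$ representing a point of $C^0(k):=C(k)\setminus C(\mathbb F_{p^2})$. Then the $\mathbb F_{p^2}$-algebra $\mathrm{End}(t)=\{A\in\mathrm{Mat}_3(\mathbb F_{p^2}):A\cdot t\in k\cdot t\}$ is isomorphic to either $\mathbb F_{p^2}$ or $\mathbb F_{p^6}$. *)

(* Defs.v *)
From HB Require Import structures.
From mathcomp Require Import all_boot all_order all_algebra.
Set Implicit Arguments. Unset Strict Implicit. Unset Printing Implicit Defensive.
Import Order.TTheory GRing.Theory Num.Theory.
Local Open Scope ring_scope.

Definition inFq (k : fieldType) (q : nat) (x : k) : bool := x ^+ q == x.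

Definition mxOverFq (k : fieldType) (q m n : nat) (A : 'M[k]_(m, n)) : bool :=
  [forall i, forall j, inFq q (A i j)].

Definition on_fermat (k : fieldType) (p : nat) (t : 'cV[k]_3) : Prop :=
  \sum_(i < 3) t i 0 ^+ p.+1 = 0.

Definition Fq_rational (k : fieldType) (q : nat) (t : 'cV[k]_3) : Prop :=
  exists u : 'cV[k]_3, [/\ u != 0, mxOverFq q u & exists l : k, u = l *: t].

Definition End_t (k : fieldType) (p : nat) (t : 'cV[k]_3) (A : 'M[k]_3) : Prop :=
  mxOverFq (p ^ 2) A /\ exists c : k, A *m t = c *: t.

(* Main.v *)
Require Import Defs.
From HB Require Import structures.
From mathcomp Require Import all_boot all_order all_algebra.
From mathcomp Require Import ring zify.
Import Order.TTheory GRing.Theory Num.Theory.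
Local Open Scope ring_scope.
Set Implicit Arguments. Unset Strict Implicit.

Definition o0 : 'I_3 := @Ordinal 3 0 isT.
Definition o1 : 'I_3 := @Ordinal 3 1 isT.
Definition o2 : 'I_3 := @Ordinal 3 2 isT.

Lemma sum3 (R : nmodType) (F : 'I_3 -> R) : \sum_(i < 3) F i = F o0 + F o1 + F o2.
Proof.
rewrite !big_ord_recl big_ord0 addr0 addrA; congr (F _ + F _ + F _); exact: val_inj.
Qed.

Lemma ord3P (P : 'I_3 -> Prop) : P o0 -> P o1 -> P o2 -> forall i, P i.
Proof.
move=> H0 H1 H2 [[|[|[|//]]] Hi].
- by rewrite (_ : Ordinal Hi = o0) //; exact: val_inj.
- by rewrite (_ : Ordinal Hi = o1) //; exact: val_inj.
- by rewrite (_ : Ordinal Hi = o2) //; exact: val_inj.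
Qed.

Lemma cV3_eq (R : Type) (x y : 'cV[R]_3) :
  x o0 0 = y o0 0 -> x o1 0 = y o1 0 -> x o2 0 = y o2 0 -> x = y.
Proof.
move=> H0 H1 H2; apply/matrixP => i j; rewrite (ord1 j).
by elim/ord3P: i.
Qed.

Lemma cV3_neq0 (R : nmodType) (x : 'cV[R]_3) :
  x != 0 -> [\/ x o0 0 != 0, x o1 0 != 0 | x o2 0 != 0].
Proof.
move=> nx; apply/or3P; apply/negPn/negP => /norP[/negPn/eqP e0 /norP[/negPn/eqP e1 /negPn/eqP e2]].
by move/eqP: nx; apply; apply: cV3_eq; rewrite mxE.
Qed.

Section F.
Variable (k : fieldType).

Definition dot (a b : 'cV[k]_3) := \sum_(i < 3) a i 0 * b i 0.
Definition cross (a b : 'cV[k]_3) : 'cV[k]_3 :=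
  \col_(i < 3) [:: a o1 0 * b o2 0 - a o2 0 * b o1 0;
                   a o2 0 * b o0 0 - a o0 0 * b o2 0;
                   a o0 0 * b o1 0 - a o1 0 * b o0 0]`_i.

Lemma dotE a b : dot a b = a o0 0 * b o0 0 + a o1 0 * b o1 0 + a o2 0 * b o2 0.
Proof. by rewrite /dot sum3. Qed.

Lemma dotZl c a b : dot (c *: a) b = c * dot a b.
Proof. rewrite !dotE !mxE; ring. Qed.

Lemma dot_map (f : {rmorphism k -> k}) a b :
  dot (map_mx f a) (map_mx f b) = f (dot a b).
Proof. by rewrite !dotE !mxE !rmorphD !rmorphM. Qed.

Lemma cross_map (f : {rmorphism k -> k}) a b :
  cross (map_mx f a) (map_mx f b) = map_mx f (cross a b).
Proof.
by apply: cV3_eq; rewrite !mxE /= rmorphB !rmorphM.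
Qed.

Lemma eq_from (a b e : k) : a - b = e -> e = 0 -> a = b.
Proof. by move=> <- /eqP; rewrite subr_eq0 => /eqP. Qed.

Lemma par_sc (w0 w1 w2 x0 x1 x2 : k) :
  w0 * x1 - w1 * x0 = 0 -> w2 * x0 - w0 * x2 = 0 -> w0 != 0 ->
  x1 = x0 / w0 * w1 /\ x2 = x0 / w0 * w2.
Proof.
move=> e2 e1 nz; split; apply: (mulIf nz); rewrite mulrAC divfK //.
  by apply: (eq_from _ e2); ring.
by apply: (@eq_from _ _ (- (w2 * x0 - w0 * x2))); [ring | rewrite e1 oppr0].
Qed.

Lemma par_cross (w x : 'cV[k]_3) : w != 0 -> cross w x = 0 -> exists c, x = c *: w.
Proof.
move=> /cV3_neq0 nw cz.
have e0 : w o1 0 * x o2 0 - w o2 0 * x o1 0 = 0 by move: (congr1 (fun M : 'cV[k]_3 => M o0 0) cz); rewrite !mxE.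
have e1 : w o2 0 * x o0 0 - w o0 0 * x o2 0 = 0 by move: (congr1 (fun M : 'cV[k]_3 => M o1 0) cz); rewrite !mxE.
have e2 : w o0 0 * x o1 0 - w o1 0 * x o0 0 = 0 by move: (congr1 (fun M : 'cV[k]_3 => M o2 0) cz); rewrite !mxE.
case: nw => nz.
- have [h1 h2] := par_sc e2 e1 nz.
  exists (x o0 0 / w o0 0); apply: cV3_eq; rewrite !mxE ?mulfVK //.
- have [h1 h2] := par_sc e0 e2 nz.
  exists (x o1 0 / w o1 0); apply: cV3_eq; rewrite !mxE ?mulfVK //.
- have [h1 h2] := par_sc e1 e0 nz.
  exists (x o2 0 / w o2 0); apply: cV3_eq; rewrite !mxE ?mulfVK //.
Qed.
Lemma cross_cross a b x :
  cross (cross a b) x = dot a x *: b - dot b x *: a.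
Proof. by apply: cV3_eq; rewrite !dotE !mxE /=; ring. Qed.

Lemma par2 (a b x y : 'cV[k]_3) : dot a x = 0 -> dot b x = 0 -> dot a y = 0 ->
  dot b y = 0 -> cross a b != 0 -> y != 0 -> exists c, x = c *: y.
Proof.
move=> ax bx ay byy nw ny.
have [c1 h1] : exists c, x = c *: cross a b by apply: par_cross nw _; rewrite cross_cross ax bx !scale0r subr0.
have [c2 h2] : exists c, y = c *: cross a b by apply: par_cross nw _; rewrite cross_cross ay byy !scale0r subr0.
have c2n : c2 != 0 by apply: contraNneq ny => c20; rewrite h2 c20 scale0r.
by exists (c1 / c2); rewrite h1 h2 scalerA divfK.
Qed.
Lemma dotC a b : dot a b = dot b a.
Proof. by rewrite !dotE; ring. Qed.

End F.

Section Frob.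
Variables (k : closedFieldType) (p : nat) (hchar : p \in [pchar k]).
Definition Phi : {rmorphism k -> k} := pFrobenius_aut hchar.
Definition Sg : {rmorphism k -> k} := (Phi \o Phi)%FUN.
Local Notation phi := Phi.
Local Notation sg := Sg.
Lemma SgE x : Sg x = Phi (Phi x). Proof. by []. Qed.
Lemma PhiE x : Phi x = x ^+ p. Proof. by []. Qed.

Lemma p_gt1 : (1 < p)%N.
Proof. exact: prime_gt1 (pcharf_prime hchar). Qed.

Lemma sgE x : sg x = x ^+ (p ^ 2).
Proof. by rewrite SgE !PhiE -exprM expnS expn1. Qed.

Lemma iter_sgE n x : iter n sg x = x ^+ (p ^ (2 * n)).
Proof.
elim: n => [|n IH]; first by rewrite muln0 expn0 expr1.
by rewrite iterS IH sgE -exprM -expnD mulnS addnC.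
Qed.

Lemma root_ex (m : nat) (y : k) : (0 < m)%N -> exists x : k, x ^+ m = y.
Proof.
move=> m0; have [x hx] := @solve_monicpoly k m (fun i => if i == 0%N then y else 0) m0.
exists x; rewrite hx (bigD1 (Ordinal m0)) //= big1 ?addr0 ?expr0 ?mulr1 //.
by move=> i; rewrite -val_eqE /= => /negbTE ->; rewrite mul0r.
Qed.

Lemma phi_surj y : exists x, phi x = y.
Proof. have [x hx] := root_ex y (ltnW p_gt1); by exists x; rewrite PhiE. Qed.

Lemma sg_surj y : exists x, sg x = y.
Proof.
have [z hz] := phi_surj y; have [x hx] := phi_surj z.
by exists x; rewrite SgE hx hz.
Qed.

Lemma sg_inj : injective sg.
Proof. exact: fmorph_inj. Qed.

Lemma fixedP m n (A : 'M[k]_(m, n)) : mxOverFq (p ^ 2) A <-> map_mx sg A = A.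
Proof.
split.
- move=> /forallP hA; apply/matrixP => i j; rewrite mxE sgE.
  by move: (hA i) => /forallP /(_ j) /eqP.
- move=> hA; apply/forallP => i; apply/forallP => j; apply/eqP.
  by rewrite -sgE; move/matrixP: hA => /(_ i j); rewrite mxE.
Qed.

End Frob.

Section Fermat.
Variables (k : closedFieldType) (p : nat) (hchar : p \in [pchar k]).
Variables (t : 'cV[k]_3) (ht0 : t != 0) (hC : on_fermat p t)
  (hnr : ~ Fq_rational (p ^ 2) t).
Local Notation phi := (Phi hchar).
Local Notation sg := (Sg hchar).

Lemma map_nz (f : {rmorphism k -> k}) m n (x : 'M[k]_(m, n)) : x != 0 -> map_mx f x != 0.
Proof. by apply: contraNneq => h; apply/eqP; apply: (@map_mx_inj _ _ f m n); rewrite h map_mx0. Qed.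

Lemma Rat (x : 'cV[k]_3) mu : x != 0 -> map_mx sg x = mu *: x ->
  exists2 nu, nu != 0 & map_mx sg (nu *: x) = nu *: x.
Proof.
move=> nx hx.
have mu0 : mu != 0.
  by apply: contraNneq (map_nz sg nx) => m0; rewrite hx m0 scale0r.
have q1 : (0 < (p ^ 2).-1)%N.
  have h := p_gt1 hchar; rewrite expnS expn1; nia.
have [nu hnu] := root_ex (mu^-1) q1.
have nu0 : nu != 0.
  apply: contraTneq (invr_neq0 mu0) => n0; rewrite -hnu n0 expr0n.
  by rewrite negbK eqn0Ngt q1.
exists nu => //; rewrite map_mxZ hx scalerA sgE.
have -> : (p ^ 2 = ((p ^ 2).-1).+1)%N by rewrite prednK // expn_gt0 prime_gt0 // (pcharf_prime hchar).
by rewrite exprS hnu mulfVK.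
Qed.

Lemma rat_false (u : 'cV[k]_3) l : u != 0 -> map_mx sg u = u -> u = l *: t -> False.
Proof.
move=> nu hu ul; apply: hnr; exists u; split => //; last by exists l.
by apply/fixedP.
Qed.

Lemma t_npar mu : map_mx sg t = mu *: t -> False.
Proof.
move=> h; have [nu nu0 hnu] := Rat ht0 h.
apply: (@rat_false (nu *: t) nu) => //.
by rewrite scaler_eq0 negb_or ht0 nu0.
Qed.

Lemma map_sg (x : 'cV[k]_3) : map_mx sg x = map_mx phi (map_mx phi x).
Proof. by apply/matrixP => i j; rewrite !mxE. Qed.

Lemma dot_sg a b : dot (map_mx sg a) (map_mx sg b) = sg (dot a b).
Proof. by rewrite !map_sg !dot_map. Qed.

Lemma dot_u_t : dot (map_mx phi t) t = 0.
Proof.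
transitivity (\sum_(i < 3) t i 0 ^+ p.+1); last exact: hC.
by apply: eq_bigr => i _; rewrite mxE PhiE exprSr.
Qed.

Lemma dot_u_s : dot (map_mx phi t) (map_mx sg t) = 0.
Proof. by rewrite map_sg dot_map dotC dot_u_t rmorph0. Qed.

Lemma L1 (a : 'cV[k]_3) : a != 0 -> map_mx sg a = a -> dot a t = 0 -> False.
Proof.
move=> a0 fa at0.
have ut := dot_u_t; have us := dot_u_s.
have as0 : dot a (map_mx sg t) = 0 by rewrite -{1}fa dot_sg at0 rmorph0.
case: (eqVneq (cross a (map_mx phi t)) 0) => [cz|cnz].
- have [l hl] := par_cross a0 cz.
  have [mu hmu] := phi_surj hchar l.
  have tb : t = mu *: map_mx phi a.
    apply: (@map_mx_inj _ _ phi 3 1).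
    by rewrite hl map_mxZ hmu -map_sg fa.
  have b0 : map_mx phi a != 0 by apply: map_nz.
  have mu0 : mu != 0 by apply: contraNneq ht0 => m0; rewrite tb m0 scale0r.
  apply: (@rat_false (map_mx phi a) mu^-1 b0).
    by rewrite -[in RHS]fa map_sg; apply/matrixP => i j; rewrite !mxE.
  by rewrite tb scalerA mulVf ?scale1r.
- have [c hc] := par2 as0 us at0 ut cnz ht0.
  exact: (@t_npar c hc).
Qed.

Lemma L3 (M : 'M[k]_3) : map_mx sg M = M -> M *m t = 0 -> M = 0.
Proof.
move=> fM Mt; apply/matrixP => i j.
set a := (row i M)^T.
have fa : map_mx sg a = a.
  by apply/matrixP => x y; rewrite !mxE -[in RHS]fM mxE.
have at0 : dot a t = 0.
  move/matrixP: Mt => /(_ i 0); rewrite !mxE => <-.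
  by apply: eq_bigr => l _; rewrite !mxE.
have : a = 0 by apply/eqP/negP => /negP a0; exact: (L1 a0 fa at0).
by move/matrixP => /(_ j 0); rewrite !mxE.
Qed.

Definition vs n := iter n (map_mx sg) t.
Definition T : 'M[k]_3 := \matrix_(i, j) vs j i 0.

Lemma Tmul (v : 'cV[k]_3) : T *m v = v o0 0 *: vs 0 + v o1 0 *: vs 1 + v o2 0 *: vs 2.
Proof.
apply/matrixP => i j; rewrite (ord1 j) !mxE sum3 !mxE.
by rewrite [v o0 0 * _]mulrC [v o1 0 * _]mulrC [v o2 0 * _]mulrC.
Qed.

Lemma vsS n : vs n.+1 = map_mx sg (vs n).
Proof. by []. Qed.

Lemma detT : \det T != 0.
Proof.
apply/negP => /det0P [v v0 vT].
set vv := v^T.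
have dv : forall j : 'I_3, dot vv (vs j) = 0.
  move=> j; move/matrixP: vT => /(_ 0 j); rewrite !mxE => <-.
  by apply: eq_bigr => l _; rewrite !mxE.
have vv0 : vv != 0 by rewrite trmx_eq0.
have d0 : dot t vv = 0 by rewrite dotC (dv o0).
have d1 : dot (vs 1) vv = 0 by rewrite dotC (dv o1).
have d2 : dot (vs 2) vv = 0 by rewrite dotC (dv o2).
have cnz : cross t (vs 1) != 0.
  apply/negP => /eqP cz; have [c hc] := par_cross ht0 cz.
  exact: (@t_npar c hc).
set u := map_mx phi t.
have u0 : u != 0 by apply: map_nz.
have tu : dot t u = 0 by rewrite dotC dot_u_t.
have s1u : dot (vs 1) u = 0 by rewrite dotC dot_u_s.
have [c1 h1] := par2 tu s1u d0 d1 cnz vv0.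
have s2u : dot (vs 2) u = 0 by rewrite h1 dotC dotZl dotC d2 mulr0.
have cnz2 : cross (vs 1) (vs 2) != 0.
  by rewrite !vsS cross_map map_nz.
have e1 : dot (vs 1) (map_mx sg u) = 0 by rewrite vsS dot_sg tu rmorph0.
have e2 : dot (vs 2) (map_mx sg u) = 0 by rewrite vsS dot_sg s1u rmorph0.
have [mu hmu] := par2 e1 e2 s1u s2u cnz2 u0.
have [nu nu0 hnu] := Rat u0 hmu.
apply: (@L1 (nu *: u)) => //.
  by rewrite scaler_eq0 negb_or nu0 u0.
by rewrite dotZl dot_u_t mulr0.
Qed.

Definition col3 (x y z : k) : 'cV[k]_3 := \col_(i < 3) [:: x; y; z]`_i.

Lemma Tunit : T \in unitmx.
Proof. by rewrite unitmxE unitfE detT. Qed.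

Lemma indep x y z : x *: vs 0 + y *: vs 1 + z *: vs 2 = 0 -> [/\ x = 0, y = 0 & z = 0].
Proof.
move=> h.
have : T *m col3 x y z = 0 by rewrite Tmul !mxE.
move=> /(congr1 (mulmx (invmx T))); rewrite mulKmx ?Tunit // mulmx0 => /matrixP hc.
by split; [have := hc o0 0 | have := hc o1 0 | have := hc o2 0]; rewrite !mxE.
Qed.

Lemma vs_nz n : vs n != 0.
Proof. elim: n => [|n IH] //; rewrite vsS; exact: map_nz. Qed.

Lemma eigen (A : 'M[k]_3) c : map_mx sg A = A -> A *m t = c *: t ->
  forall n, A *m vs n = iter n sg c *: vs n.
Proof.
move=> fA hA; elim => [|n IH] //.
by rewrite vsS -{1}fA -map_mxM IH map_mxZ.
Qed.

Lemma eq0_from (L R X : k) : L = R -> X = L - R -> X = 0.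
Proof. by move=> -> ->; rewrite subrr. Qed.

Definition wv := invmx T *m vs 3.

Lemma hv3 : vs 3 = wv o0 0 *: vs 0 + wv o1 0 *: vs 1 + wv o2 0 *: vs 2.
Proof. by rewrite -Tmul /wv mulKVmx // Tunit. Qed.

Lemma rel (A : 'M[k]_3) c : map_mx sg A = A -> A *m t = c *: t ->
  [/\ wv o0 0 * (c - iter 3 sg c) = 0, wv o1 0 * (iter 1 sg c - iter 3 sg c) = 0
    & wv o2 0 * (iter 2 sg c - iter 3 sg c) = 0].
Proof.
move=> fA hA.
have E := eigen fA hA.
have H3 := E 3%N.
rewrite hv3 !mulmxDr -!scalemxAr !E in H3.
apply: indep; apply/matrixP => i j; rewrite (ord1 j).
have Hi := congr1 (fun M : 'cV[k]_3 => M i 0) H3.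
rewrite !mxE in Hi; rewrite !mxE.
by apply: (eq0_from Hi); rewrite /=; ring.
Qed.

Definition inz : 'I_3 := odflt o0 [pick i | t i 0 != 0].

Lemma t_inz : t inz 0 != 0.
Proof.
rewrite /inz; case: pickP => [i hi //|none] /=.
by case/negP: ht0; apply/eqP; apply: cV3_eq; rewrite mxE; apply/eqP/negbFE/none.
Qed.

Definition fe (A : 'M[k]_3) := (A *m t) inz 0 / t inz 0.

Lemma fE A c : A *m t = c *: t -> fe A = c.
Proof. by move=> h; rewrite /fe h mxE mulfK // t_inz. Qed.

Lemma End_tP A : End_t p t A -> map_mx sg A = A /\ exists c, A *m t = c *: t.
Proof. by case=> /fixedP h e. Qed.

Lemma fe_inj A B : End_t p t A -> End_t p t B -> fe A = fe B -> A = B.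
Proof.
move=> /End_tP [fA [cA hA]] /End_tP [fB [cB hB]].
rewrite (fE hA) (fE hB) => e.
apply/eqP; rewrite -subr_eq0; apply/eqP; apply: L3.
  by rewrite map_mxB fA fB.
by rewrite mulmxBl hA hB e subrr.
Qed.

Lemma fe_add A B : End_t p t A -> End_t p t B -> fe (A + B) = fe A + fe B.
Proof.
move=> /End_tP [fA [cA hA]] /End_tP [fB [cB hB]].
by rewrite (fE hA) (fE hB); apply: fE; rewrite mulmxDl hA hB scalerDl.
Qed.

Lemma fe_mul A B : End_t p t A -> End_t p t B -> fe (A *m B) = fe A * fe B.
Proof.
move=> /End_tP [fA [cA hA]] /End_tP [fB [cB hB]].
rewrite (fE hA) (fE hB); apply: fE.
by rewrite -mulmxA hB -scalemxAr hA scalerA mulrC.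
Qed.

Lemma fe_scal c : fe (c%:M) = c.
Proof. by apply: fE; rewrite mul_scalar_mx. Qed.


Lemma case1_img (hbg : ~~ ((wv o1 0 == 0) && (wv o2 0 == 0))) A :
  End_t p t A -> inFq (p ^ (2 * 1)) (fe A).
Proof.
move=> /End_tP [fA [c hA]]; rewrite (fE hA).
case: (rel fA hA); rewrite !iterS [iter 0 _ _]/= => r0 r1 r2.
rewrite /inFq muln1 -sgE; apply/eqP.
case: (eqVneq (sg c) c) => // ne; exfalso.
have ne2 : sg (sg c) != sg c by rewrite (inj_eq (@sg_inj _ _ hchar)).
have ne3 : sg (sg c) != sg (sg (sg c)) by rewrite eq_sym !(inj_eq (@sg_inj _ _ hchar)).
have g0 : wv o2 0 = 0.
  by move/eqP: r2; rewrite mulf_eq0 subr_eq0 (negbTE ne3) orbF => /eqP.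
have b0 : wv o1 0 != 0 by move: hbg; rewrite g0 eqxx andbT.
have e13 : sg c = sg (sg (sg c)).
  by move/eqP: r1; rewrite mulf_eq0 subr_eq0 (negbTE b0) => /eqP.
have a0 : wv o0 0 = 0.
  move/eqP: r0; rewrite mulf_eq0 subr_eq0 -e13 [c == _]eq_sym (negbTE ne) orbF.
  by move/eqP.
have h3 : vs 3 = wv o1 0 *: vs 1 by rewrite hv3 a0 g0 !scale0r add0r addr0.
have [b' hb'] := @sg_surj _ _ hchar (wv o1 0).
have h2 : vs 2 = b' *: vs 0.
  apply: (@map_mx_inj _ _ sg 3 1).
  by rewrite -vsS h3 map_mxZ hb'.
have hz : b' *: vs 0 + 0 *: vs 1 + (-1) *: vs 2 = 0.
  by rewrite scale0r addr0 scaleN1r -h2 subrr.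
have [_ _ /eqP] := indep hz.
by rewrite oppr_eq0 oner_eq0.
Qed.

Lemma case1_surj (x : k) : inFq (p ^ (2 * 1)) x -> exists2 A, End_t p t A & fe A = x.
Proof.
rewrite /inFq muln1 => /eqP hx; exists x%:M; last exact: fe_scal.
split; last by exists x; rewrite mul_scalar_mx.
by apply/fixedP; rewrite map_scalar_mx sgE hx.
Qed.

Lemma case3_img (h3 : (wv o1 0 == 0) && (wv o2 0 == 0)) A :
  End_t p t A -> inFq (p ^ (2 * 3)) (fe A).
Proof.
move: h3 => /andP [/eqP b0 /eqP g0].
move=> /End_tP [fA [c hA]]; rewrite (fE hA).
case: (rel fA hA) => r0 _ _.
have a0 : wv o0 0 != 0.
  by apply: contraNneq (vs_nz 3) => a0; rewrite hv3 a0 b0 g0 !scale0r !addr0.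
by move/eqP: r0; rewrite mulf_eq0 (negbTE a0) subr_eq0 /inFq -iter_sgE eq_sym.
Qed.

Lemma case3_surj (h3 : (wv o1 0 == 0) && (wv o2 0 == 0)) (y : k) :
  inFq (p ^ (2 * 3)) y -> exists2 A, End_t p t A & fe A = y.
Proof.
move: h3 => /andP [/eqP b0 /eqP g0].
rewrite /inFq -iter_sgE => /eqP hy.
pose yn n := iter n sg y.
pose D : 'M[k]_3 := diag_mx (\row_(j < 3) yn j).
pose A := T *m D *m invmx T.
have hAT : A *m T = T *m D by rewrite /A mulmxKV // Tunit.
have AvsE : forall j : 'I_3, A *m vs j = yn j *: vs j.
  move=> j; apply/matrixP => i z; rewrite (ord1 z).
  transitivity ((A *m T) i j).
    by rewrite !mxE; apply: eq_bigr => l _; rewrite !mxE.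
  by rewrite hAT mul_mx_diag !mxE mulrC.
have Av3 : A *m vs 3 = yn 3 *: vs 3.
  rewrite hv3 b0 g0 !scale0r !addr0 -scalemxAr (AvsE o0) scalerA.
  by rewrite scalerA [yn 3]/yn hy mulrC.
have AvsS : forall j : 'I_3, A *m vs j.+1 = yn j.+1 *: vs j.+1.
  by elim/ord3P; [exact: (AvsE o1) | exact: (AvsE o2) | exact: Av3].
have Su : map_mx sg T \in unitmx.
  by rewrite unitmxE det_map_mx unitfE fmorph_eq0 detT.
have key : map_mx sg A *m map_mx sg T = A *m map_mx sg T.
  rewrite -map_mxM hAT map_mxM map_diag_mx mul_mx_diag.
  apply/matrixP => i j.
  transitivity ((A *m vs j.+1) i 0); last first.
    by rewrite !mxE; apply: eq_bigr => l _; rewrite !mxE.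
  by rewrite AvsS !mxE mulrC.
exists A; last first.
  by apply: fE; exact: (AvsE o0).
split; last by exists y; exact: (AvsE o0).
apply/fixedP.
by rewrite -(mulmxK Su (map_mx sg A)) key mulmxK.
Qed.

Lemma mainF : exists (d : nat) (f : 'M[k]_3 -> k),
    (d = 1%N \/ d = 3%N) /\
    (forall A, End_t p t A -> inFq (p ^ (2 * d)) (f A)) /\
    (forall x : k, inFq (p ^ (2 * d)) x -> exists2 A, End_t p t A & f A = x) /\
    (forall A B, End_t p t A -> End_t p t B -> f A = f B -> A = B) /\
    (forall A B, End_t p t A -> End_t p t B -> f (A + B) = f A + f B) /\
    (forall A B, End_t p t A -> End_t p t B -> f (A *m B) = f A * f B) /\
    (forall c : k, inFq (p ^ 2) c -> f (c%:M) = c).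
Proof.
have common : forall d, (d = 1%N \/ d = 3%N) ->
    (forall A, End_t p t A -> inFq (p ^ (2 * d)) (fe A)) ->
    (forall x : k, inFq (p ^ (2 * d)) x -> exists2 A, End_t p t A & fe A = x) ->
  exists (d : nat) (f : 'M[k]_3 -> k),
    (d = 1%N \/ d = 3%N) /\
    (forall A, End_t p t A -> inFq (p ^ (2 * d)) (f A)) /\
    (forall x : k, inFq (p ^ (2 * d)) x -> exists2 A, End_t p t A & f A = x) /\
    (forall A B, End_t p t A -> End_t p t B -> f A = f B -> A = B) /\
    (forall A B, End_t p t A -> End_t p t B -> f (A + B) = f A + f B) /\
    (forall A B, End_t p t A -> End_t p t B -> f (A *m B) = f A * f B) /\
    (forall c : k, inFq (p ^ 2) c -> f (c%:M) = c).
  move=> d hd h1 h2; exists d, fe; do !split => //.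
  - exact: fe_inj.
  - exact: fe_add.
  - exact: fe_mul.
  - by move=> c _; exact: fe_scal.
case: (boolP ((wv o1 0 == 0) && (wv o2 0 == 0))) => [h3 | hbg].
- by apply: (common 3%N); [right | exact: case3_img | exact: case3_surj].
- by apply: (common 1%N); [left | exact: case1_img | exact: case1_surj].
Qed.
End Fermat.

Unset Implicit Arguments.

Theorem lemma3p12 (k : closedFieldType) (p : nat) (hp : prime p)
  (hchar : p \in [pchar k]) (t : 'cV[k]_3) (ht0 : t != 0)
  (hC : on_fermat p t) (hnr : ~ Fq_rational (p ^ 2) t) :
  exists (d : nat) (f : 'M[k]_3 -> k),
    (d = 1%N \/ d = 3%N) /\
    (forall A, End_t p t A -> inFq (p ^ (2 * d)) (f A)) /\
    (forall x : k, inFq (p ^ (2 * d)) x -> exists2 A, End_t p t A & f A = x) /\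
    (forall A B, End_t p t A -> End_t p t B -> f A = f B -> A = B) /\
    (forall A B, End_t p t A -> End_t p t B -> f (A + B) = f A + f B) /\
    (forall A B, End_t p t A -> End_t p t B -> f (A *m B) = f A * f B) /\
    (forall c : k, inFq (p ^ 2) c -> f (c%:M) = c).
Proof. exact: (@mainF k p hchar t ht0 hC hnr). Qed.
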